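(* For every nonnegative integer $r$, $$\sum_{n=1}^{\infty}\frac{n^2}{(2n+2r+1)(2n-1)^2(2n+1)}\frac{\binom{2n}{n}}{\binom{2n+2r}{n+r}}=\frac{1}{2^{2r+1}}\left(\frac{2\wp(2r+2)+\wp(2r)}{8}-\frac{1}{16(r+1)}\right),$$ where $\wp(q)=\int_0^{\pi/2} z\sin^q z\,\mathrm{d}z$. *)

(* Defs.v *)
From Stdlib Require Import Reals.
From Coquelicot Require Import Coquelicot.
Open Scope R_scope.

Definition wp (q : nat) : R := RInt (fun z => z * (sin z) ^ q) 0 (PI / 2).

Definition summand (r n : nat) : R :=
  (INR n) ^ 2
  / ((2 * INR n + 2 * INR r + 1) * (2 * INR n - 1) ^ 2 * (2 * INR n + 1))
  * (Binomial.C (2 * n) n / Binomial.C (2 * n + 2 * r) (n + r)).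

(* Main.v *)
Require Import Defs.
From Stdlib Require Import Reals.
From Coquelicot Require Import Coquelicot.
From Stdlib Require Import Lra Lia.
Open Scope R_scope.

Ltac trig_close x K :=
  let Hc := fresh in
  assert (Hc : cos x * cos x = 1 - sin x * sin x) by (pose proof (sin2_cos2 x) as Hs; unfold Rsqr in Hs; lra);
  match goal with |- ?L = ?R =>
    let H := fresh in
    assert (H : L - R = K * (cos x * cos x - (1 - sin x * sin x))) by (field; auto);
    rewrite Hc in H; lra end.

Lemma cont_of (f : R -> R) x : ex_derive f x -> continuous f x.
Proof. apply (@ex_derive_continuous R_AbsRing R_NormedModule). Qed.

Lemma ex_of (f : R -> R) a b : (forall x, ex_derive f x) -> ex_RInt f a b.
Proof. intros df. apply (@ex_RInt_continuous R_CompleteNormedModule). intros; now apply cont_of. Qed.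

Lemma RInt_lin3 (f1 f2 f3 F : R -> R) a b c1 c2 c3 :
  (forall x, ex_derive f1 x) -> (forall x, ex_derive f2 x) -> (forall x, ex_derive f3 x) ->
  (forall x, is_derive F x (c1 * f1 x + c2 * f2 x + c3 * f3 x)) ->
  @eq R (c1 * RInt f1 a b + c2 * RInt f2 a b + c3 * RInt f3 a b) (F b - F a).
Proof.
  intros d1 d2 d3 dF.
  assert (HF := @is_RInt_derive R_CompleteNormedModule F (fun x => c1 * f1 x + c2 * f2 x + c3 * f3 x) a b
     (fun x _ => dF x)).
  assert (E : forall f : R -> R, (forall x, ex_derive f x) -> is_RInt f a b (RInt f a b)).
  { intros f df. apply (@RInt_correct R_CompleteNormedModule). now apply ex_of. }
  assert (H := is_RInt_plus _ _ _ _ _ _ (is_RInt_plus _ _ _ _ _ _ (is_RInt_scal _ _ _ c1 _ (E f1 d1))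
     (is_RInt_scal _ _ _ c2 _ (E f2 d2))) (is_RInt_scal _ _ _ c3 _ (E f3 d3))).
  assert (HF' : is_RInt (fun x => c1 * f1 x + c2 * f2 x + c3 * f3 x) a b (minus (F b) (F a))).
  { apply HF. intros x _. 
    apply cont_of.
    apply (ex_derive_plus (fun x => c1 * f1 x + c2 * f2 x) (fun x => c3 * f3 x)).
    apply (ex_derive_plus (fun x => c1 * f1 x) (fun x => c2 * f2 x)).
    all: apply (ex_derive_scal); auto. }
  apply (@is_RInt_ext R_NormedModule _ (fun x => c1 * f1 x + c2 * f2 x + c3 * f3 x)) in H; [|intros; reflexivity].
  apply (@is_RInt_unique R_CompleteNormedModule) in H.
  apply (@is_RInt_unique R_CompleteNormedModule) in HF'.
  rewrite H in HF'. exact HF'.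
Qed.

Lemma RInt_comb (f g : R -> R) a b c1 c2 :
  (forall x, ex_derive f x) -> (forall x, ex_derive g x) ->
  @eq R (RInt (fun x => c1 * f x + c2 * g x) a b) (c1 * RInt f a b + c2 * RInt g a b).
Proof.
  intros df dg.
  assert (E : forall f : R -> R, (forall x, ex_derive f x) -> is_RInt f a b (RInt f a b)).
  { intros h dh. apply (@RInt_correct R_CompleteNormedModule). now apply ex_of. }
  assert (H := is_RInt_plus _ _ _ _ _ _ (is_RInt_scal _ _ _ c1 _ (E f df)) (is_RInt_scal _ _ _ c2 _ (E g dg))).
  apply (@is_RInt_ext R_NormedModule _ (fun x => c1 * f x + c2 * g x)) in H; [|intros; reflexivity].
  apply (@is_RInt_unique R_CompleteNormedModule) in H. exact H.
Qed.

Lemma tele (a E : nat -> R) (L : R) :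
  (forall k, a k = E k - E (S k)) -> is_lim_seq E L -> is_series a (E 0%nat - L).
Proof.
  intros Ha HE.
  assert (Hs : forall N, sum_n a N = E 0%nat - E (S N)).
  { induction N. - rewrite sum_O, Ha. reflexivity.
    - rewrite sum_Sn, IHN, Ha. unfold plus; simpl. ring. }
  apply (filterlim_ext (fun N => E 0%nat - E (S N))). { intros; now rewrite Hs. }
  apply (is_lim_seq_minus' (fun _ => E 0%nat) (fun N => E (S N))).
  apply is_lim_seq_const. now apply -> is_lim_seq_incr_1.
Qed.

Lemma wp_rec q : (INR q + 2) * wp (q+2) = (INR q + 1) * wp q + / (INR q + 2).
Proof.
  assert (Hq : INR q + 2 <> 0) by (pose proof (pos_INR q); lra).
  assert (H : (INR q + 1) * RInt (fun z => z * sin z ^ q) 0 (PI/2) + (- (INR q + 2)) * RInt (fun z => z * sin z ^ (q+2)) 0 (PI/2) + 0 * RInt (fun _ => 0) 0 (PI/2) = - / (INR q + 2)).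
  { rewrite (RInt_lin3 _ _ _ (fun z => z * sin z ^ (S q) * cos z - sin z ^ (S (S q)) / (INR q + 2))).
    - rewrite sin_PI2, cos_PI2, sin_0, !pow1. simpl. field; auto.
    - intros; auto_derive; auto.
    - intros; auto_derive; auto.
    - intros; auto_derive; auto.
    - intros x. auto_derive. auto.
      change (match q with 0%nat => 1 | S _ => INR q + 1 end) with (INR (S q)).
      replace (q+2)%nat with (S (S q)) by lia. rewrite S_INR. simpl. trig_close x (x * sin x ^ q * (INR q + 1)). }
  unfold wp. lra.
Qed.

Lemma wp0 : wp 0 = PI^2/8.
Proof.
  assert (H := RInt_lin3 (fun z => z * sin z ^ 0) (fun _ => 0) (fun _ => 0)
     (fun z => z^2/2) 0 (PI/2) 1 0 0).
  unfold wp. rewrite <- (Rmult_1_l (RInt _ _ _)).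
  replace (PI^2/8) with ((PI/2)^2/2 - 0^2/2) by field.
  rewrite <- H. ring.
  - intros; auto_derive; auto.
  - intros; auto_derive; auto.
  - intros; auto_derive; auto.
  - intros x. auto_derive. auto. simpl. field.
Qed.

Definition cI (k : nat) : R := RInt (fun x => cos x ^ k) 0 (PI/2).
Definition cJ (k : nat) : R := RInt (fun x => x^2 * cos x ^ k) 0 (PI/2).

Lemma cI_rec k : (INR k + 2) * cI (k+2) = (INR k + 1) * cI k.
Proof.
  assert (H : (INR k + 2) * cI (k+2) + (- (INR k + 1)) * cI k + 0 * RInt (fun _ => 0) 0 (PI/2) = 0).
  { unfold cI. rewrite (RInt_lin3 _ _ _ (fun x => cos x ^ (S k) * sin x)).
    - rewrite sin_PI2, cos_PI2, sin_0. simpl. ring.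
    - intros; auto_derive; auto.
    - intros; auto_derive; auto.
    - intros; auto_derive; auto.
    - intros x. auto_derive. auto.
      change (match k with 0%nat => 1 | S _ => INR k + 1 end) with (INR (S k)).
      replace (k+2)%nat with (S (S k)) by lia. rewrite S_INR. simpl.
      trig_close x (- cos x ^ k * (INR k + 1)). }
  lra.
Qed.

Lemma cJ_rec k : cI (k+2) + ((INR k + 2)^2/2) * cJ (k+2) + (- ((INR k + 2) * (INR k + 1) / 2)) * cJ k = 0.
Proof.
  unfold cI, cJ.
  match goal with |- ?A + ?B + ?C = 0 => replace A with (1*A) by ring end.
  rewrite (RInt_lin3 _ _ _ (fun x => x * cos x ^ (S (S k)) + (INR k + 2) * (x^2/2) * cos x ^ (S k) * sin x)).
  - rewrite sin_PI2, cos_PI2, sin_0. simpl. ring.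
  - intros; auto_derive; auto.
  - intros; auto_derive; auto.
  - intros; auto_derive; auto.
  - intros x. auto_derive. auto.
    change (match k with 0%nat => 1 | S _ => INR k + 1 end) with (INR (S k)).
    replace (k+2)%nat with (S (S k)) by lia. rewrite !S_INR. simpl.
    trig_close x (- (INR k + 2) * (x^2/2) * (INR k + 1) * cos x ^ k).
Qed.

Lemma cI1 : cI 1 = 1.
Proof.
  unfold cI. rewrite <- (Rmult_1_l (RInt _ _ _)).
  replace (1 * RInt (fun x : R => cos x ^ 1) 0 (PI / 2)) with
    (1 * RInt (fun x : R => cos x ^ 1) 0 (PI / 2) + 0 * RInt (fun _ => 0) 0 (PI/2) + 0 * RInt (fun _ => 0) 0 (PI/2)) by ring.
  rewrite (RInt_lin3 _ _ _ sin).
  - rewrite sin_PI2, sin_0; lra.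
  - intros; auto_derive; auto.
  - intros; auto_derive; auto.
  - intros; auto_derive; auto.
  - intros x. auto_derive. auto. simpl. ring.
Qed.

Lemma cJ1 : cJ 1 = PI^2/4 - 2.
Proof.
  unfold cJ.
  replace (RInt (fun x : R => x^2 * cos x ^ 1) 0 (PI / 2)) with
    (1 * RInt (fun x : R => x^2 * cos x ^ 1) 0 (PI / 2) + 0 * RInt (fun _ => 0) 0 (PI/2) + 0 * RInt (fun _ => 0) 0 (PI/2)) by ring.
  rewrite (RInt_lin3 _ _ _ (fun x => x^2 * sin x + 2 * x * cos x - 2 * sin x)).
  - rewrite sin_PI2, cos_PI2, sin_0, cos_0. nra.
  - intros; auto_derive; auto.
  - intros; auto_derive; auto.
  - intros; auto_derive; auto.
  - intros x. auto_derive. auto. simpl. ring.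
Qed.

Lemma cI_pos j : 0 < cI (2*j+1).
Proof.
  induction j.
  - simpl. rewrite cI1. lra.
  - replace (2 * S j + 1)%nat with ((2*j+1)+2)%nat by lia.
    assert (H := cI_rec (2*j+1)). pose proof (pos_INR (2*j+1)).
    assert (cI (2 * j + 1 + 2) = (INR (2 * j + 1) + 1) * cI (2 * j + 1) / (INR (2 * j + 1) + 2)).
    { rewrite <- H. field. lra. }
    rewrite H1. apply Rdiv_lt_0_compat; [apply Rmult_lt_0_compat|]; lra.
Qed.

Lemma x_le_4sin x : 0 <= x <= PI/2 -> x <= 4 * sin x.
Proof.
  intros [H0 H1]. pose proof PI_4.
  assert (Hb := pre_sin_bound x 0 H0 ltac:(lra)). destruct Hb as [Hb _].
  unfold sin_approx, sin_term in Hb. simpl in Hb.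
  assert (x <= 2) by lra.
  nra.
Qed.

Lemma cJ_bound k : 0 <= cJ k <= 16 * (cI k - cI (k+2)).
Proof.
  split.
  - unfold cJ. apply RInt_ge_0. pose proof PI2_RGT_0; lra.
    apply ex_of. intros; auto_derive; auto.
    intros x Hx. apply Rmult_le_pos. nra. apply pow_le. apply cos_ge_0; lra.
  - unfold cI, cJ.
    replace (16 * (RInt (fun x : R => cos x ^ k) 0 (PI / 2) - RInt (fun x : R => cos x ^ (k + 2)) 0 (PI / 2)))
      with (RInt (fun x => 16 * cos x ^ k + (-16) * cos x ^ (k+2)) 0 (PI/2)).
    2: { rewrite RInt_comb; [lra|..]. intros; auto_derive; auto. intros; auto_derive; auto. }
    apply RInt_le. pose proof PI2_RGT_0; lra.
    apply ex_of. intros; auto_derive; auto.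
    apply ex_of. intros; auto_derive; auto.
    intros x Hx.
    assert (Hc : 0 <= cos x) by (apply cos_ge_0; lra).
    assert (Hck : 0 <= cos x ^ k) by (apply pow_le; lra).
    assert (Hs := x_le_4sin x ltac:(lra)).
    assert (Hs2 := sin2_cos2 x). unfold Rsqr in Hs2.
    replace (k+2)%nat with (S (S k)) by lia. simpl.
    assert (x^2 <= 16 * (sin x * sin x)) by nra.
    nra.
Qed.

Definition Qk k : R := cJ k / cI k.

Lemma Q_rec_gen m : 0 < cI m -> Qk m - Qk (m+2) = 2 / (INR m + 2)^2.
Proof.
  intros Hp.
  assert (H1 := cI_rec m). assert (H2 := cJ_rec m). pose proof (pos_INR m).
  assert (E1 : cI (m+2) = (INR m + 1) * cI m / (INR m + 2)) by (rewrite <- H1; field; lra).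
  rewrite E1 in H2.
  assert (E2 : cJ (m+2) = ((INR m + 2) * (INR m + 1) / 2 * cJ m - (INR m + 1) * cI m / (INR m + 2)) / ((INR m + 2)^2/2)).
  { assert (E2' : (INR m + 2)^2/2 * cJ (m+2) = (INR m + 2) * (INR m + 1) / 2 * cJ m - (INR m + 1) * cI m / (INR m + 2)) by lra.
    rewrite <- E2'. field. lra. }
  unfold Qk. rewrite E1, E2. field. repeat split; lra.
Qed.

Lemma Q_rec j : Qk (2*j+1) - Qk (2*j+1+2) = 2 / (INR (2*j+1) + 2)^2.
Proof. apply Q_rec_gen, cI_pos. Qed.

Lemma Q_bounds j : 0 <= Qk (2*j+1) <= 16 * / INR (S j).
Proof.
  assert (Hp := cI_pos j). assert (Hb := cJ_bound (2*j+1)). assert (H1 := cI_rec (2*j+1)).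
  replace (INR (2*j+1)) with (2*INR j+1) in * by (rewrite plus_INR, mult_INR; simpl; ring).
  rewrite S_INR. pose proof (pos_INR j).
  set (I := cI (2*j+1)) in *. set (J := cJ (2*j+1)) in *.
  assert (HI2 : cI (2*j+1+2) = (2*INR j + 1 + 1) * I / (2*INR j + 1 + 2)) by (rewrite <- H1; field; lra).
  rewrite HI2 in Hb.
  assert (E : 16 * (I - (2 * INR j + 1 + 1) * I / (2 * INR j + 1 + 2)) = 16 * I / (2 * INR j + 3)) by (field; lra).
  rewrite E in Hb. unfold Qk. fold I J.
  split.
  - apply Rdiv_le_0_compat; lra.
  - apply Rle_trans with (16 / (2 * INR j + 3)).
    + apply Rmult_le_reg_r with I; [lra|].
      replace (J / I * I) with J by (field; lra).
      replace (16 / (2 * INR j + 3) * I) with (16 * I / (2 * INR j + 3)) by (field; lra). lra.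
    + unfold Rdiv. apply Rmult_le_compat_l; [lra|]. apply Rinv_le_contravar; lra.
Qed.

Lemma inv_S_lim : is_lim_seq (fun k => / INR (S k)) 0.
Proof.
  assert (H : is_lim_seq (fun k => INR (S k)) p_infty) by (apply -> is_lim_seq_incr_1; apply is_lim_seq_INR).
  assert (H2 := is_lim_seq_inv _ _ H ltac:(discriminate)). simpl in H2. exact H2.
Qed.

Definition P k : R := match k with 0%nat => PI^2/4 | S j => Qk (2*j+1) end.

Lemma P_step k : 1/(2*INR k+1)^2 = (P k - P (S k))/2.
Proof.
  destruct k as [|j].
  - simpl P. unfold Qk. simpl (2*0+1)%nat. rewrite cI1, cJ1. simpl INR. field.
  - unfold P. replace (2 * S j + 1)%nat with (2*j+1+2)%nat by lia.
    rewrite Q_rec. replace (INR (2*j+1)) with (2*INR j+1) by (rewrite plus_INR, mult_INR; simpl; ring).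
    rewrite S_INR. pose proof (pos_INR j). field. lra.
Qed.

Lemma P_lim : is_lim_seq P 0.
Proof.
  apply is_lim_seq_incr_1. simpl P.
  apply is_lim_seq_le_le with (u := fun _ => 0) (w := fun n => 16 * / INR (S n)).
  - intros n. apply Q_bounds.
  - apply is_lim_seq_const.
  - replace (Finite 0) with (Finite (16 * 0)) by (f_equal; ring).
    apply is_lim_seq_mult'. apply is_lim_seq_const. apply inv_S_lim.
Qed.

Lemma C_neq0 n k : Binomial.C n k <> 0.
Proof.
  unfold Binomial.C, Rdiv. apply Rmult_integral_contrapositive_currified. apply INR_fact_neq_0.
  apply Rinv_neq_0_compat, Rmult_integral_contrapositive_currified; apply INR_fact_neq_0.
Qed.

Lemma base : is_series (fun k => summand 0 (S k)) (PI^2/64).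
Proof.
  set (E := fun k => /16 * ((P k + P (S k))/2 + / (2*INR k + 1))).
  replace (PI^2/64) with (E 0%nat - 0).
  2: { unfold E. simpl P. unfold Qk. simpl (2*0+1)%nat. rewrite cI1, cJ1. simpl INR. field. }
  apply tele.
  - intros k. unfold summand, E.
    rewrite Nat.mul_0_r, !Nat.add_0_r. change (INR 0) with 0.
    assert (h1 := P_step k). assert (h2 := P_step (S k)).
    assert (Hc := C_neq0 (2 * S k) (S k)).
    rewrite !S_INR in *. pose proof (pos_INR k).
    assert (e1 : P k = P (S k) + 2 * (1 / (2 * INR k + 1) ^ 2)) by lra.
    assert (e2 : P (S (S k)) = P (S k) - 2 * (1 / (2 * (INR k + 1) + 1) ^ 2)) by lra.
    rewrite e1, e2. field. lra.
  - unfold E. replace (Finite 0) with (Finite (/16 * ((0 + 0)/2 + 0))) by (f_equal; field).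
    apply is_lim_seq_mult'. apply is_lim_seq_const.
    apply is_lim_seq_plus'. apply is_lim_seq_div'. apply is_lim_seq_plus'. apply P_lim.
    apply -> is_lim_seq_incr_1. apply P_lim. apply is_lim_seq_const. lra.
    apply is_lim_seq_le_le with (u := fun _ => 0) (w := fun n => / INR (S n)).
    + intros n. rewrite S_INR. pose proof (pos_INR n). split.
      * apply Rlt_le, Rinv_0_lt_compat; lra.
      * apply Rinv_le_contravar; lra.
    + apply is_lim_seq_const.
    + apply inv_S_lim.
Qed.

Lemma C_central m : Binomial.C (2 * S m) (S m) = Binomial.C (2*m) m * (2*(2*INR m+1)/(INR m+1)).
Proof.
  unfold Binomial.C.
  replace (2*S m - S m)%nat with (S m) by lia. replace (2*m - m)%nat with m by lia.
  replace (2 * S m)%nat with (S (S (2*m))) by lia.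
  rewrite !fact_simpl, !mult_INR, !S_INR, mult_INR. simpl (INR 2).
  pose proof (INR_fact_neq_0 (2*m)). pose proof (INR_fact_neq_0 m). pose proof (pos_INR m).
  field. repeat split; lra.
Qed.

Definition Bn r n : R := Binomial.C (2*n) n / Binomial.C (2*(n+r)) (n+r).

Lemma B_Sr r n : Bn (S r) n = Bn r n * ((INR n + INR r + 1) / (2*(2*(INR n + INR r)+1))).
Proof.
  unfold Bn. rewrite Nat.add_succ_r, C_central, plus_INR.
  pose proof (C_neq0 (2*(n+r)) (n+r)). pose proof (pos_INR n). pose proof (pos_INR r).
  field. repeat split; lra.
Qed.

Lemma B_Sn r n : Bn r (S n) = Bn r n * (2*(2*INR n+1)/(INR n+1)) / (2*(2*(INR n+INR r)+1)/(INR n+INR r+1)).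
Proof.
  unfold Bn. simpl (S n + r)%nat. rewrite !C_central, plus_INR.
  pose proof (C_neq0 (2*(n+r)) (n+r)). pose proof (pos_INR n). pose proof (pos_INR r).
  field. repeat split; lra.
Qed.

Lemma sum_B r n : summand r n = INR n^2/((2*INR n+2*INR r+1)*(2*INR n-1)^2*(2*INR n+1)) * Bn r n.
Proof. unfold summand, Bn. replace (2*n+2*r)%nat with (2*(n+r))%nat by lia. reflexivity. Qed.

Definition Dd r n : R := - Bn r n * (INR n * (INR n - 1) * ((3*INR r + 4) * INR n - (INR r + 1)))
   / (8 * (3*INR r + 2) * (INR r + 2)^2 * (2*INR n - 1)^2 * (2*INR n + 2*INR r + 1)).

Definition alpha r : R := (3*INR r+5)*(2*INR r+1)/(8*(INR r+2)*(3*INR r+2)).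

Lemma step_id r n : (1 <= n)%nat -> summand (S r) n = alpha r * summand r n + Dd r n - Dd r (S n).
Proof.
  intros Hn. apply le_INR in Hn. simpl (INR 1) in Hn.
  rewrite !sum_B, B_Sr. unfold Dd, alpha. rewrite B_Sn. rewrite !S_INR.
  pose proof (pos_INR r).
  field. repeat split; lra.
Qed.

Lemma B_lim r : is_lim_seq (fun k => Bn r (S k)) (/ 4^r).
Proof.
  induction r.
  - apply (is_lim_seq_ext (fun _ => 1)).
    + intros k. unfold Bn. rewrite Nat.add_0_r. field. apply C_neq0.
    + simpl. replace (/ 1) with 1 by field. apply is_lim_seq_const.
  - set (y := INR r).
    apply (is_lim_seq_ext (fun k => Bn r (S k) * ((1 + (y+1) * / INR (S k))/(2*(2 + (2*y+1) * / INR (S k)))))).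
    + intros k. rewrite B_Sr. f_equal. unfold y. pose proof (pos_INR r). pose proof (pos_INR k).
      rewrite S_INR. field. repeat split; try lra.
    + replace (/ 4 ^ S r) with (/ 4^r * ((1 + (y+1) * 0)/(2*(2 + (2*y+1)*0)))).
      2: { simpl. field. apply pow_nonzero. lra. }
      apply is_lim_seq_mult'. exact IHr.
      apply is_lim_seq_div'.
      * apply is_lim_seq_plus'. apply is_lim_seq_const. apply is_lim_seq_mult'. apply is_lim_seq_const. apply inv_S_lim.
      * apply is_lim_seq_mult'. apply is_lim_seq_const.
        apply is_lim_seq_plus'. apply is_lim_seq_const. apply is_lim_seq_mult'. apply is_lim_seq_const. apply inv_S_lim.
      * lra.
Qed.

Definition Lr r : R := - / 4^r * ((3*INR r+4)/8) / (8*(3*INR r+2)*(INR r+2)^2).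

Lemma D_lim r : is_lim_seq (fun k => Dd r (S k)) (Lr r).
Proof.
  pose proof (pos_INR r). set (y := INR r) in *.
  set (K := 8*(3*y+2)*(y+2)^2).
  assert (HK : 0 < K) by (unfold K; apply Rmult_lt_0_compat; [lra|]; apply pow_lt; lra).
  apply (is_lim_seq_ext (fun k => - Bn r (S k) * (((1 - / INR (S k)) * ((3*y+4) - (y+1) * / INR (S k)))
        / ((2 - / INR (S k))^2 * (2 + (2*y+1) * / INR (S k)))) / K)).
  - intros k. unfold Dd. fold y. fold K. rewrite S_INR. pose proof (pos_INR k).
    assert (Ht : 0 < / (INR k + 1)) by (apply Rinv_0_lt_compat; lra).
    assert (Ht1 : / (INR k + 1) <= 1) by (rewrite <- Rinv_1; apply Rinv_le_contravar; lra).
    unfold K. field. repeat split; try lra; nra.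
  - unfold Lr. fold y. fold K.
    replace (- / 4 ^ r * ((3 * y + 4) / 8) / K) with
      (- / 4^r * (((1 - 0) * ((3*y+4) - (y+1) * 0)) / ((2 - 0)^2 * (2 + (2*y+1) * 0))) / K)
      by (field; repeat split; try lra; apply pow_nonzero; lra).
    apply is_lim_seq_div'; [|apply is_lim_seq_const|lra].
    apply is_lim_seq_mult'.
    + apply (is_lim_seq_ext (fun k => (-1) * Bn r (S k))). intros; ring.
      replace (- / 4^r) with ((-1) * / 4^r) by ring.
      apply is_lim_seq_mult'. apply is_lim_seq_const. apply B_lim.
    + apply is_lim_seq_div'.
      * apply is_lim_seq_mult'.
        -- apply is_lim_seq_minus'. apply is_lim_seq_const. apply inv_S_lim.
        -- apply is_lim_seq_minus'. apply is_lim_seq_const. apply is_lim_seq_mult'. apply is_lim_seq_const. apply inv_S_lim.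
      * apply is_lim_seq_mult'.
        -- simpl. apply is_lim_seq_mult'. apply is_lim_seq_minus'. apply is_lim_seq_const. apply inv_S_lim.
           apply is_lim_seq_mult'. apply is_lim_seq_minus'. apply is_lim_seq_const. apply inv_S_lim.
           apply is_lim_seq_const.
        -- apply is_lim_seq_plus'. apply is_lim_seq_const. apply is_lim_seq_mult'. apply is_lim_seq_const. apply inv_S_lim.
      * lra.
Qed.

Definition RHS r : R := / 2 ^ (2 * r + 1)
     * ((2 * wp (2 * r + 2) + wp (2 * r)) / 8 - / (16 * (INR r + 1))).

Lemma RHS0 : RHS 0 = PI^2/64.
Proof.
  unfold RHS. simpl (2*0+2)%nat. simpl (2*0)%nat. simpl (2*0+1)%nat.
  assert (H := wp_rec 0). simpl (0+2)%nat in H. change (INR 0) with 0 in *.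
  rewrite wp0 in H.
  assert (E : wp 2 = PI^2/16 + /4). { replace (/ (0+2)) with (/2) in H by (f_equal; ring). lra. }
  rewrite E, wp0. rewrite Nat.add_0_l. field.
Qed.

Lemma RHS_S r : RHS (S r) = alpha r * RHS r + (0 - Lr r).
Proof.
  unfold RHS, alpha, Lr.
  replace (2 * S r + 2)%nat with ((2*r+2)+2)%nat by lia.
  replace (2 * S r)%nat with (2*r+2)%nat by lia.
  replace (2 * S r + 1)%nat with (2*r+1+2)%nat by lia.
  assert (H1 := wp_rec (2*r+2)). assert (H0 := wp_rec (2*r)).
  replace (INR (2*r+2)) with (2*INR r+2) in H1 by (rewrite plus_INR, mult_INR; simpl; ring).
  replace (INR (2*r)) with (2*INR r) in H0 by (rewrite mult_INR; simpl; ring).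
  rewrite S_INR. pose proof (pos_INR r).
  assert (E0 : wp (2*r+2) = ((2 * INR r + 1) * wp (2 * r) + / (2 * INR r + 2)) / (2 * INR r + 2)).
  { rewrite <- H0. field. lra. }
  assert (E1 : wp (2*r+2+2) = ((2 * INR r + 2 + 1) * wp (2 * r + 2) + / (2 * INR r + 2 + 2)) / (2 * INR r + 2 + 2)).
  { rewrite <- H1. field. lra. }
  rewrite E1, E0.
  rewrite !pow_add. replace (4^r) with (2^(2*r)) by (rewrite pow_mult; simpl; f_equal; ring).
  assert (0 < 2^(2*r)) by (apply pow_lt; lra).
  simpl (2^1). simpl (2^2).
  field. repeat split; lra.
Qed.

Theorem main (r : nat) : is_series (fun k : nat => summand r (S k)) (RHS r).
Proof.
  induction r.
  - rewrite RHS0. apply base.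
  - rewrite RHS_S.
    assert (Dd1 : Dd r 1 = 0) by (unfold Dd; simpl INR; field; pose proof (pos_INR r); repeat split; try lra; apply pow_nonzero; lra).
    assert (Ht := tele (fun k => Dd r (S k) - Dd r (S (S k))) (fun k => Dd r (S k)) (Lr r) (fun k => eq_refl) (D_lim r)).
    cbv beta in Ht. rewrite Dd1 in Ht.
    assert (H := is_series_plus _ _ _ _ (is_series_scal (alpha r) _ _ IHr) Ht).
    apply (is_series_ext _ (fun n => summand (S r) (S n))) in H.
    exact H.
    intros n. rewrite (step_id r (S n)) by lia. cbv beta. unfold plus, scal; simpl. unfold mult; simpl. ring.
Qed.


(* sum over n >= 1, written as the series over k >= 0 of summand r (k+1) *)
Theorem theorem5p0p3 (r : nat) :
  is_series (fun k : nat => summand r (S k))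
    (/ 2 ^ (2 * r + 1)
     * ((2 * wp (2 * r + 2) + wp (2 * r)) / 8 - / (16 * (INR r + 1)))).
Proof.
  exact (main r).
Qed.
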